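(* Let $b\ge 1$, $d=b+1$, $n=2b$, and let $f,g:\mathbb{F}_2^d\to\mathbb{F}_2$ be nonlinear bipermutive local rules whose no-boundary CA $F,G:\mathbb{F}_2^{2b}\to\mathbb{F}_2^b$ form a pair of orthogonal CA, with superposition S-box $H:\mathbb{F}_2^n\to\mathbb{F}_2^n$. Let $v=(v_1,\dots,v_n)\in\mathbb{F}_2^n\setminus\{\underline 0\}$ with $nl(v\cdot H)=0$. (i) If $v_b=v_n=0$, then the right shift $v'=(0,v_1,\dots,v_{n-1})$ satisfies $nl(v'\cdot H)=0$. (ii) If $v_1=v_{b+1}=0$, then the left shift $v'=(v_2,\dots,v_n,0)$ satisfies $nl(v'\cdot H)=0$.
   Context: A local rule $f:\mathbb{F}_2^d\to\mathbb{F}_2$ is bipermutive if $f(x_1,\dots,x_d)=x_1\oplus\varphi(x_2,\dots,x_{d-1})\oplus x_d$ for some $\varphi:\mathbb{F}_2^{d-2}\to\mathbb{F}_2$; it is nonlinear if its algebraic degree is at least 2. With $b=d-1$, the no-boundary CA of $f$ is $F:\mathbb{F}_2^{2b}\to\mathbb{F}_2^b$, $F(x)_i=f(x_i,\dots,x_{i+b})$, $i=1,\dots,b$; it defines the $2^b\times 2^b$ Latin square with entry $F(x\|y)$ at row $x$, column $y$ ($x,y\in\mathbb{F}_2^b$, $\|$ = concatenation). $F,G$ with bipermutive rules of equal diameter are orthogonal if $(x,y)\mapsto(F(x\|y),G(x\|y))$ is a bijection of $\mathbb{F}_2^b\times\mathbb{F}_2^b$. The superposition S-box is $H(x)=F(x)\|G(x)$,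 i.e. $H(x)_i=f(x_i,\dots,x_{i+b})$, $H(x)_{b+i}=g(x_i,\dots,x_{i+b})$ for $i=1,\dots,b$. The component function is $v\cdot H(x)=\bigoplus_i v_iH(x)_i$, and $nl(h)$ is the minimum Hamming distance of $h$ to the affine Boolean functions ($nl(h)=0$ iff $h$ is affine). *)

(* Defs.v *)
(* F_2 is modelled by bool (xor = addb, product = andb).
   Indices are 0-based: paper coordinate x_i is index i-1. *)
From mathcomp Require Import all_boot.
Set Implicit Arguments. Unset Strict Implicit. Unset Printing Implicit Defensive.

Definition vec (m : nat) := {ffun 'I_m -> bool}.

(* total access by a natural-number index (false out of range; never used out of range below) *)
Definition getv m (x : vec m) (k : nat) : bool :=
  match @insub nat (fun k => k < m) 'I_m k with Some i => x i | None => false end.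

Definition concat m (x y : vec m) : vec (m + m) :=
  [ffun k : 'I_(m + m) => if k < m then getv x k else getv y (k - m)].

(* Algebraic normal form coefficient of the monomial x^u (Moebius transform) *)
Definition anf_coef m (h : vec m -> bool) (u : vec m) : bool :=
  \big[addb/false]_(x : vec m | [forall i, x i ==> u i]) h x.

Definition alg_deg m (h : vec m -> bool) : nat :=
  \max_(u : vec m | anf_coef h u) #|[set i | u i]|.

Definition bipermutive b (f : vec b.+1 -> bool) : Prop :=
  exists phi : vec b.-1 -> bool, forall x : vec b.+1,
    f x = addb (addb (getv x 0) (phi [ffun j : 'I_b.-1 => getv x j.+1])) (getv x b).

Definition nonlinear m (h : vec m -> bool) : Prop := 2 <= alg_deg h.

Definition nbCA b (f : vec b.+1 -> bool) (x : vec (b + b)) : vec b :=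
  [ffun i : 'I_b => f [ffun j : 'I_b.+1 => getv x (i + j)]].

Definition orthogonal b (f g : vec b.+1 -> bool) : Prop :=
  bijective (fun p : vec b * vec b =>
               (nbCA f (concat p.1 p.2), nbCA g (concat p.1 p.2))).

Definition sbox b (f g : vec b.+1 -> bool) (x : vec (b + b)) : vec (b + b) :=
  concat (nbCA f x) (nbCA g x).

Definition dot m (v x : vec m) : bool := \big[addb/false]_(i : 'I_m) (v i && x i).
Definition component m (v : vec m) (H : vec m -> vec m) (x : vec m) : bool := dot v (H x).

Definition affine_fun m (a : vec m) (c : bool) (x : vec m) : bool := addb c (dot a x).
Definition nl m (h : vec m -> bool) : nat :=
  \big[minn/#|{: vec m}|]_(p : vec m * bool)
     #|[set x : vec m | h x != affine_fun p.1 p.2 x]|.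

Definition shiftR m (v : vec m) : vec m :=
  [ffun k : 'I_m => if k == 0 :> nat then false else getv v k.-1].
Definition shiftL m (v : vec m) : vec m :=
  [ffun k : 'I_m => getv v k.+1].

(* Main.v *)
Require Import Defs.
From mathcomp Require Import all_boot.
Set Implicit Arguments. Unset Strict Implicit.

Lemma getv_lt m (x : vec m) k (Hk : k < m) : getv x k = x (Ordinal Hk).
Proof. by rewrite /getv insubT; congr (x _); apply: val_inj. Qed.

Lemma getv_ord m (x : vec m) (i : 'I_m) : getv x i = x i.
Proof. by rewrite (getv_lt x (ltn_ord i)); congr (x _); apply: val_inj. Qed.

Lemma getv_ge m (x : vec m) k : m <= k -> getv x k = false.
Proof. by move=> H; rewrite /getv insubF // ltnNge H. Qed.

Lemma getv_shiftL m (x : vec m) k : getv (shiftL x) k = getv x k.+1.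
Proof.
case: (ltnP k m) => H.
  by rewrite (getv_lt _ H) ffunE.
by rewrite !getv_ge // ltnW.
Qed.

Lemma getv_shiftR m (x : vec m) k : k < m ->
  getv (shiftR x) k = if k == 0 then false else getv x k.-1.
Proof. by move=> H; rewrite (getv_lt _ H) ffunE. Qed.

Lemma dotE m (u w : vec m) :
  dot u w = \big[addb/false]_(0 <= k < m) (getv u k && getv w k).
Proof. by rewrite /dot big_mkord; apply: eq_bigr => i _; rewrite !getv_ord. Qed.

Lemma dot_shift m (u w : vec m) : dot (shiftR u) w = dot u (shiftL w).
Proof.
rewrite !dotE; case: m u w => [|m] u w; first by rewrite !big_geq.
rewrite big_nat_recl // big_nat_recr //= getv_shiftR // eqxx /=.
rewrite getv_shiftL (getv_ge w (leqnn _)) andbF addbF.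
apply: eq_big_nat => k /andP [_ Hk].
by rewrite getv_shiftR // getv_shiftL.
Qed.

Lemma dot_shift' m (u w : vec m) : dot (shiftL u) w = dot u (shiftR w).
Proof.
have C : forall (a c : vec m), dot a c = dot c a.
  by move=> a c; apply: eq_bigr => i _; rewrite andbC.
by rewrite C -dot_shift C.
Qed.

Lemma dot_congr m (v w w' : vec m) :
  (forall k, k < m -> getv v k -> getv w k = getv w' k) -> dot v w = dot v w'.
Proof.
move=> H; rewrite !dotE; apply: eq_big_nat => k /andP [_ Hk].
by case Hv: (getv v k) => //=; rewrite H.
Qed.

Lemma bigmin_le (T : eqType) (s : seq T) (F : T -> nat) N p :
  p \in s -> \big[minn/N]_(i <- s) F i <= F p.
Proof.
elim: s => [|a s IH] //; rewrite in_cons big_cons => /orP [/eqP ->|Hp].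
  by rewrite geq_minl.
by rewrite geq_min IH ?orbT.
Qed.

Lemma nl0P m (h : vec m -> bool) :
  nl h = 0 <-> exists p : vec m * bool, forall x, h x = affine_fun p.1 p.2 x.
Proof.
split.
  move=> H0.
  case: (pickP (fun p : vec m * bool => #|[set x | h x != affine_fun p.1 p.2 x]| == 0)).
    move=> p; rewrite cards_eq0 => /eqP Hp; exists p => x.
    apply/eqP; apply: negbNE; apply/negP => Hx.
    by have := in_set0 x; rewrite -Hp inE Hx.
  move=> Hn; exfalso.
  have : 0 < nl h.
    rewrite /nl; apply: (big_ind (fun n => 0 < n)).
    - by apply/card_gt0P; exists [ffun => false].
    - by move=> a c Ha Hc; rewrite leq_min Ha Hc.
    - by move=> p _; rewrite lt0n Hn.
  by rewrite H0.
case=> p Hp; apply/eqP; rewrite -leqn0 /nl.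
  apply: (leq_trans (bigmin_le (fun p : vec m * bool => #|[set x | h x != affine_fun p.1 p.2 x]|) #|{: vec m}| (mem_index_enum p))).
have -> : #|[set x | h x != affine_fun p.1 p.2 x]| = 0.
  apply/eqP; rewrite cards_eq0; apply/eqP/setP => x.
  by rewrite inE in_set0 Hp eqxx.
by [].
Qed.

From mathcomp Require Import zify.

Lemma getv_concat m (p q : vec m) k :
  getv (concat p q) k = if k < m then getv p k else getv q (k - m).
Proof.
case: (ltnP k (m + m)) => H.
  by rewrite (getv_lt _ H) ffunE.
rewrite getv_ge //; have -> : (k < m) = false by lia.
by rewrite getv_ge //; lia.
Qed.

Lemma getv_nbCA b (f : vec b.+1 -> bool) x k : k < b ->
  getv (nbCA f x) k = f [ffun j : 'I_b.+1 => getv x (k + j)].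
Proof. by move=> H; rewrite (getv_lt _ H) ffunE. Qed.

Theorem lemma3 (b : nat) (f g : vec b.+1 -> bool) (v : vec (b + b)) :
  1 <= b ->
  bipermutive f -> nonlinear f ->
  bipermutive g -> nonlinear g ->
  orthogonal f g ->
  v != [ffun => false] ->
  nl (component v (sbox f g)) = 0 ->
  (getv v b.-1 = false -> getv v (b + b - 1) = false ->
     nl (component (shiftR v) (sbox f g)) = 0) /\
  (getv v 0 = false -> getv v b = false ->
     nl (component (shiftL v) (sbox f g)) = 0).
Proof.
move=> b1 _ _ _ _ _ _ /nl0P [[a c] Ha]; split => hv1 hv2; apply/nl0P.
- exists (shiftR a, c) => x.
  rewrite /component dot_shift (@dot_congr _ v _ (sbox f g (shiftL x))).
    by have := Ha (shiftL x); rewrite /component /affine_fun /= => ->; rewrite dot_shift.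
  move=> k Hk Hv; rewrite getv_shiftL /sbox !getv_concat.
  case: (ltnP k.+1 b) => H1.
    have -> : (k < b) = true by lia.
    rewrite !getv_nbCA //; try lia.
    by congr f; apply/ffunP => j; rewrite !ffunE getv_shiftL addSn.
  have Hkb : b <= k.
    rewrite leqNgt; apply/negP => Hk'.
    have E : k = b.-1 by lia.
    by rewrite E hv1 in Hv.
  have Hk2 : k.+1 < b + b.
    rewrite ltn_neqAle Hk andbT; apply/negP => /eqP E.
    have E' : k = b + b - 1 by lia.
    by rewrite E' hv2 in Hv.
  have -> : (k < b) = false by lia.
  rewrite !getv_nbCA; try lia.
  congr g; apply/ffunP => j; rewrite !ffunE getv_shiftL; congr getv; lia.
- exists (shiftL a, c) => x.
  rewrite /component dot_shift' (@dot_congr _ v _ (sbox f g (shiftR x))).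
    by have := Ha (shiftR x); rewrite /component /affine_fun /= => ->; rewrite dot_shift'.
  move=> k Hk Hv.
  have Hk0 : k != 0 by apply/eqP => E; rewrite E hv1 in Hv.
  have Hkb : k != b by apply/eqP => E; rewrite E hv2 in Hv.
  rewrite getv_shiftR // (negbTE Hk0) /sbox !getv_concat.
  case: (ltnP k b) => H1.
    have -> : (k.-1 < b) = true by lia.
    rewrite !getv_nbCA //; try lia.
    congr f; apply/ffunP => j; rewrite !ffunE; have := ltn_ord j => Hj.
    rewrite getv_shiftR; last by lia.
    have -> : (k + j == 0) = false by lia.
    congr getv; lia.
  have -> : (k.-1 < b) = false by lia.
  rewrite !getv_nbCA; try lia.
  congr g; apply/ffunP => j; rewrite !ffunE; have := ltn_ord j => Hj.
  rewrite getv_shiftR; last by lia.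
  have -> : (k - b + j == 0) = false by lia.
  congr getv; lia.
Qed.
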